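(* Let $\varphi:\mathcal A\to\mathcal A$ be a continuous multiplicative map (i.e. $\varphi(AB)=\varphi(A)\varphi(B)$ for all $A,B\in\mathcal A$, not assumed linear) such that $\varphi(S)=S$ and $\varphi(\alpha I)=\alpha I$ for every $\alpha\in\mathbb C$. Then $\varphi$ is the identity map on $\mathcal A$.
   Context: $S$ denotes the $n\times n$ nilpotent Jordan block with ones on the superdiagonal and zeros elsewhere. $\mathcal A=\{f(S): f\text{ a complex polynomial}\}$ is the algebra of $n\times n$ upper-triangular Toeplitz matrices, equipped with the operator norm (induced by the Euclidean norm on $\mathbb C^n$). *)

(* Defs.v *)
From Stdlib Require Import Reals List ClassicalEpsilon.
Open Scope R_scope.

Definition Cx : Type := (R * R)%type.
Definition C0 : Cx := (0, 0).
Definition C1 : Cx := (1, 0).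
Definition Cadd (z w : Cx) : Cx := (fst z + fst w, snd z + snd w).
Definition Copp (z : Cx) : Cx := (- fst z, - snd z).
Definition Csub (z w : Cx) : Cx := Cadd z (Copp w).
Definition Cmul (z w : Cx) : Cx :=
  (fst z * fst w - snd z * snd w, fst z * snd w + snd z * fst w).
Definition Cnorm2 (z : Cx) : R := fst z * fst z + snd z * snd z.

Fixpoint Csum (k : nat) (f : nat -> Cx) : Cx :=
  match k with O => C0 | S k' => Cadd (Csum k' f) (f k') end.
Fixpoint Rsum (k : nat) (f : nat -> R) : R :=
  match k with O => 0 | S k' => Rsum k' f + f k' end.

(** n x n complex matrices, represented as functions on indices; only
    entries with indices < n are meaningful (elements of the algebra below
    vanish outside the n x n block). *)
Definition Mat : Type := nat -> nat -> Cx.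
Definition Vec : Type := nat -> Cx.

Definition mzero : Mat := fun _ _ => C0.
Definition madd (M N : Mat) : Mat := fun i j => Cadd (M i j) (N i j).
Definition msub (M N : Mat) : Mat := fun i j => Csub (M i j) (N i j).
Definition mmul (n : nat) (M N : Mat) : Mat :=
  fun i j => Csum n (fun k => Cmul (M i k) (N k j)).

Definition mscalar (n : nat) (a : Cx) : Mat :=
  fun i j => if (Nat.eqb i j && Nat.ltb i n)%bool then a else C0.

Definition Sblock (n : nat) : Mat :=
  fun i j => if (Nat.eqb j (S i) && Nat.ltb j n)%bool then C1 else C0.

(** f(S) for the polynomial f with coefficient list [a0; a1; ...]
    (Horner scheme: a0 I + S (a1 I + S (...))). *)
Fixpoint poly_of_S (n : nat) (c : list Cx) : Mat :=
  match c with
  | nil => mzero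
  | a :: c' => madd (mscalar n a) (mmul n (Sblock n) (poly_of_S n c'))
  end.

Definition inA (n : nat) (M : Mat) : Prop := exists c : list Cx, M = poly_of_S n c.

Definition vnorm (n : nat) (x : Vec) : R := sqrt (Rsum n (fun i => Cnorm2 (x i))).
Definition mapply (n : nat) (M : Mat) (x : Vec) : Vec :=
  fun i => Csum n (fun k => Cmul (M i k) (x k)).

Definition opnorm_set (n : nat) (M : Mat) : R -> Prop :=
  fun t => exists x : Vec, vnorm n x <= 1 /\ t = vnorm n (mapply n M x).

Definition opnorm (n : nat) (M : Mat) : R :=
  epsilon (inhabits 0) (fun r => is_lub (opnorm_set n M) r).

Definition continuous_on_A (n : nat) (phi : Mat -> Mat) : Prop :=
  forall A, inA n A -> forall eps, 0 < eps ->
    exists delta, 0 < delta /\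
      forall B, inA n B -> opnorm n (msub B A) < delta ->
        opnorm n (msub (phi B) (phi A)) < eps.

(* Main.v *)
Require Import Defs.
From Stdlib Require Import Reals List ClassicalEpsilon Classical Lia Lra FunctionalExtensionality.
Open Scope R_scope.
Import Defs.

Lemma Cx_eq (z w : Cx) : fst z = fst w -> snd z = snd w -> z = w.
Proof. destruct z, w; simpl; intros; subst; reflexivity. Qed.

Lemma Cring : ring_theory C0 C1 Cadd Cmul Csub Copp (@eq Cx).
Proof.
  constructor; intros; repeat match goal with x : Cx |- _ => destruct x end;
  unfold C0, C1, Cadd, Cmul, Csub, Copp; simpl; apply Cx_eq; simpl; ring.
Qed.
Add Ring CxRing : Cring.

Lemma Csum_ext k f g : (forall q, (q < k)%nat -> f q = g q) -> Csum k f = Csum k g.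
Proof. induction k; simpl; intros H; [reflexivity|]. rewrite IHk; [rewrite H; [reflexivity|lia] | intros; apply H; lia]. Qed.

Lemma Csum_zero k f : (forall q, (q < k)%nat -> f q = C0) -> Csum k f = C0.
Proof. induction k; simpl; intros H; [reflexivity|]. rewrite IHk; [rewrite H; [ring|lia] | intros; apply H; lia]. Qed.

Lemma Csum_split i m f : Csum (i + m) f = Cadd (Csum i f) (Csum m (fun p => f (i + p)%nat)).
Proof.
  induction m; simpl.
  - rewrite Nat.add_0_r. ring.
  - rewrite Nat.add_succ_r. simpl. rewrite IHm. ring.
Qed.

Lemma Csum_sub k f g : Csum k (fun q => Csub (f q) (g q)) = Csub (Csum k f) (Csum k g).
Proof. induction k; simpl. ring. rewrite IHk. ring. Qed.

Lemma Csum_single k f p : (p < k)%nat -> (forall q, (q < k)%nat -> q <> p -> f q = C0) -> Csum k f = f p.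
Proof.
  induction k; intros Hp H; [lia|]. simpl.
  destruct (Nat.eq_dec p k).
  - subst. rewrite Csum_zero. ring. intros; apply H; lia.
  - rewrite IHk by (try lia; intros; apply H; lia). rewrite (H k) by lia. ring.
Qed.

Lemma Csum_two k f : (1 <= k)%nat -> (forall q, (0 < q < k)%nat -> f q = C0) ->
  Csum (S k) f = Cadd (f O) (f k).
Proof.
  intros Hk H. simpl. f_equal.
  rewrite (Csum_single k f 0); [reflexivity|lia|intros; apply H; lia].
Qed.

Definition T (n : nat) (a : nat -> Cx) : Mat :=
  fun i j => if (Nat.leb i j && Nat.ltb j n)%bool then a (j - i)%nat else C0.

Lemma T_in n a i j : (i <= j)%nat -> (j < n)%nat -> T n a i j = a (j - i)%nat.
Proof. intros; unfold T. destruct (Nat.leb_spec i j); destruct (Nat.ltb_spec j n); simpl; auto; lia. Qed.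

Lemma T_out n a i j : ~ ((i <= j)%nat /\ (j < n)%nat) -> T n a i j = C0.
Proof. intros; unfold T. destruct (Nat.leb_spec i j); destruct (Nat.ltb_spec j n); simpl; auto; lia. Qed.

Definition conv (a b : nat -> Cx) (k : nat) : Cx := Csum (S k) (fun q => Cmul (a q) (b (k - q)%nat)).

Lemma T_mul n a b : mmul n (T n a) (T n b) = T n (conv a b).
Proof.
  extensionality i; extensionality j. unfold mmul.
  destruct (Compare_dec.le_dec i j) as [Hij|Hij]; [destruct (Compare_dec.lt_dec j n) as [Hj|Hj]|].
  - rewrite T_in by lia.
    replace n with (S j + (n - S j))%nat at 1 by lia.
    rewrite Csum_split. rewrite (Csum_zero (n - S j)).
    2:{ intros q Hq. rewrite (T_out n b). ring. lia. }
    replace (S j) with (i + S (j - i))%nat by lia.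
    rewrite Csum_split. rewrite (Csum_zero i).
    2:{ intros q Hq. rewrite (T_out n a). ring. lia. }
    unfold conv. rewrite Csum_ext with (g := fun q => Cmul (a q) (b (j - i - q)%nat)). ring.
    intros q Hq. rewrite T_in by lia. rewrite T_in by lia. f_equal; f_equal; lia.
  - rewrite T_out by lia. apply Csum_zero. intros q Hq. rewrite (T_out n b). ring. lia.
  - rewrite T_out by lia. apply Csum_zero. intros q Hq.
    destruct (Compare_dec.le_dec i q).
    + rewrite (T_out n b). ring. lia.
    + rewrite (T_out n a). ring. lia.
Qed.

Definition single (p : nat) (v : Cx) : nat -> Cx := fun i => if Nat.eqb i p then v else C0.

Lemma conv_single_l p t a k :
  conv (single p t) a k = if Nat.leb p k then Cmul t (a (k - p)%nat) else C0.
Proof.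
  unfold conv. destruct (Nat.leb_spec p k).
  - rewrite (Csum_single _ _ p) by (first [lia | intros q _ Hq; unfold single;
      destruct (Nat.eqb_spec q p); [lia|ring]]).
    unfold single. rewrite Nat.eqb_refl. reflexivity.
  - apply Csum_zero. intros q Hq. unfold single. destruct (Nat.eqb_spec q p); [lia|ring].
Qed.

Lemma T_ext n a b : (forall i, (i < n)%nat -> a i = b i) -> T n a = T n b.
Proof.
  intros H. extensionality i; extensionality j. unfold T.
  destruct (Nat.leb_spec i j); destruct (Nat.ltb_spec j n); simpl; auto. apply H; lia.
Qed.

Lemma Sblock_T n : Sblock n = T n (single 1 C1).
Proof.
  extensionality i; extensionality j. unfold Sblock, T, single.
  destruct (Nat.eqb_spec j (S i)); destruct (Nat.ltb_spec j n); destruct (Nat.leb_spec i j);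
  destruct (Nat.eqb_spec (j - i) 1); simpl; auto; lia.
Qed.

Lemma mscalar_T n a : mscalar n a = T n (single 0 a).
Proof.
  extensionality i; extensionality j. unfold mscalar, T, single.
  destruct (Nat.eqb_spec i j); destruct (Nat.ltb_spec i n); destruct (Nat.ltb_spec j n);
  destruct (Nat.leb_spec i j); destruct (Nat.eqb_spec (j - i) 0); simpl; auto; lia.
Qed.

Lemma madd_T n a b : madd (T n a) (T n b) = T n (fun i => Cadd (a i) (b i)).
Proof.
  extensionality i; extensionality j. unfold madd, T.
  destruct (Nat.leb_spec i j); destruct (Nat.ltb_spec j n); simpl; auto; ring.
Qed.

Lemma msub_T n a b : msub (T n a) (T n b) = T n (fun i => Csub (a i) (b i)).
Proof.
  extensionality i; extensionality j. unfold msub, T.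
  destruct (Nat.leb_spec i j); destruct (Nat.ltb_spec j n); simpl; auto; ring.
Qed.

Lemma mzero_T n : mzero = T n (fun _ => C0).
Proof.
  extensionality i; extensionality j. unfold mzero, T.
  destruct (Nat.leb_spec i j); destruct (Nat.ltb_spec j n); simpl; auto.
Qed.

Lemma poly_T n l : poly_of_S n l = T n (fun i => nth i l C0).
Proof.
  induction l as [|a l IH]; simpl.
  - rewrite (mzero_T n). apply T_ext. intros i _. destruct i; reflexivity.
  - rewrite IH, Sblock_T, mscalar_T, T_mul, madd_T. apply T_ext. intros i _.
    rewrite conv_single_l. unfold single.
    destruct i; simpl.
    + ring.
    + rewrite Nat.sub_0_r. ring.
Qed.

Lemma inA_T n M : inA n M -> M = T n (fun i => M O i).
Proof.
  intros [l ->]. rewrite poly_T. apply T_ext. intros i Hi.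
  rewrite T_in by lia. rewrite Nat.sub_0_r. reflexivity.
Qed.

Lemma T_inA n a : inA n (T n a).
Proof.
  exists (map a (seq 0 n)). rewrite poly_T. apply T_ext. intros i Hi.
  rewrite (nth_indep _ C0 (a O)) by (rewrite length_map, length_seq; lia).
  rewrite map_nth, seq_nth by lia. reflexivity.
Qed.

Lemma T_row0 n a i : (i < n)%nat -> T n a O i = a i.
Proof. intros; rewrite T_in by lia. rewrite Nat.sub_0_r. reflexivity. Qed.

From Coquelicot Require Complex.

Definition cm (z : Cx) : R := sqrt (Cnorm2 z).

Lemma cm_Cmod z : cm z = Complex.Cmod z.
Proof. unfold cm, Complex.Cmod, Cnorm2. f_equal. simpl. ring. Qed.

Lemma cm_ge0 z : 0 <= cm z.
Proof. apply sqrt_pos. Qed.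

Lemma Cnorm2_ge0 z : 0 <= Cnorm2 z.
Proof. unfold Cnorm2. nra. Qed.

Lemma cm_sq z : cm z * cm z = Cnorm2 z.
Proof. apply sqrt_sqrt, Cnorm2_ge0. Qed.

Lemma cm_add z w : cm (Cadd z w) <= cm z + cm w.
Proof. rewrite !cm_Cmod. apply Complex.Cmod_triangle. Qed.

Lemma cm_mul z w : cm (Cmul z w) = cm z * cm w.
Proof. rewrite !cm_Cmod. apply Complex.Cmod_mult. Qed.

Lemma cm_C0 : cm C0 = 0.
Proof. unfold cm, Cnorm2, C0; simpl. replace (0*0+0*0) with 0 by ring. apply sqrt_0. Qed.

Lemma cm_C1 : cm C1 = 1.
Proof. unfold cm, Cnorm2, C1; simpl. replace (1*1+0*0) with 1 by ring. apply sqrt_1. Qed.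

Lemma Rsum_ext k f g : (forall q, (q < k)%nat -> f q = g q) -> Rsum k f = Rsum k g.
Proof. induction k; simpl; intros H; [reflexivity|]. rewrite IHk; [rewrite H; [reflexivity|lia] | intros; apply H; lia]. Qed.

Lemma Rsum_le k f g : (forall q, (q < k)%nat -> f q <= g q) -> Rsum k f <= Rsum k g.
Proof. induction k; simpl; intros H; [lra|]. assert (f k <= g k) by (apply H; lia).
  assert (Rsum k f <= Rsum k g) by (apply IHk; intros; apply H; lia). lra. Qed.

Lemma Rsum_nonneg k f : (forall q, (q < k)%nat -> 0 <= f q) -> 0 <= Rsum k f.
Proof. induction k; simpl; intros H; [lra|]. assert (0 <= f k) by (apply H; lia).
  assert (0 <= Rsum k f) by (apply IHk; intros; apply H; lia). lra. Qed.

Lemma Rsum_ge_term k f p : (p < k)%nat -> (forall q, (q < k)%nat -> 0 <= f q) -> f p <= Rsum k f.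
Proof.
  induction k; intros Hp H; [lia|]. simpl.
  assert (0 <= Rsum k f) by (apply Rsum_nonneg; intros; apply H; lia).
  destruct (Nat.eq_dec p k).
  - subst; lra.
  - assert (f p <= Rsum k f) by (apply IHk; [lia| intros; apply H; lia]).
    assert (0 <= f k) by (apply H; lia). lra.
Qed.

Lemma Rsum_single k f p : (p < k)%nat -> (forall q, (q < k)%nat -> q <> p -> f q = 0) -> Rsum k f = f p.
Proof.
  induction k; intros Hp H; [lia|]. simpl.
  destruct (Nat.eq_dec p k).
  - subst. rewrite (Rsum_ext k f (fun _ => 0)).
    + clear. induction k; simpl; lra.
    + intros; apply H; lia.
  - rewrite IHk by (first [lia | intros; apply H; lia]). rewrite (H k) by lia. ring.
Qed.

Lemma Rsum_const k c : Rsum k (fun _ => c) = INR k * c.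
Proof. induction k; [simpl; ring|]. change (Rsum (S k) (fun _ => c)) with (Rsum k (fun _ => c) + c). rewrite IHk, S_INR; ring. Qed.

Lemma Csum_cm k f : cm (Csum k f) <= Rsum k (fun q => cm (f q)).
Proof. induction k; simpl. rewrite cm_C0; lra. pose proof (cm_add (Csum k f) (f k)). lra. Qed.

Definition Bd (n : nat) (M : Mat) : R :=
  sqrt (Rsum n (fun i => Rsqr (Rsum n (fun q => cm (M i q))))).

Lemma vnorm_ub n M x : vnorm n x <= 1 -> vnorm n (mapply n M x) <= Bd n M.
Proof.
  intros Hx.
  assert (Hs : Rsum n (fun i => Cnorm2 (x i)) <= 1).
  { unfold vnorm in Hx. pose proof (sqrt_sqrt (Rsum n (fun i => Cnorm2 (x i)))).
    pose proof (sqrt_pos (Rsum n (fun i => Cnorm2 (x i)))).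
    assert (0 <= Rsum n (fun i => Cnorm2 (x i))) by (apply Rsum_nonneg; intros; apply Cnorm2_ge0).
    nra. }
  assert (Hq : forall q, (q < n)%nat -> cm (x q) <= 1).
  { intros q Hq. pose proof (Rsum_ge_term n (fun i => Cnorm2 (x i)) q Hq (fun i _ => Cnorm2_ge0 (x i))).
    pose proof (cm_sq (x q)). pose proof (cm_ge0 (x q)). simpl in H. nra. }
  unfold vnorm, Bd. apply sqrt_le_1_alt. apply Rsum_le. intros i Hi.
  rewrite <- cm_sq. unfold Rsqr.
  assert (cm (mapply n M x i) <= Rsum n (fun q => cm (M i q))).
  { unfold mapply. eapply Rle_trans. apply Csum_cm. apply Rsum_le. intros q Hq'.
    rewrite cm_mul. pose proof (Hq q Hq'). pose proof (cm_ge0 (M i q)). pose proof (cm_ge0 (x q)). nra. }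
  pose proof (cm_ge0 (mapply n M x i)). nra.
Qed.

Lemma opnorm_lub n M : is_lub (opnorm_set n M) (opnorm n M).
Proof.
  unfold opnorm. apply epsilon_spec.
  destruct (completeness (opnorm_set n M)) as [m Hm].
  - exists (Bd n M). intros t [x [Hx ->]]. apply vnorm_ub; auto.
  - exists (vnorm n (mapply n M (fun _ => C0))). exists (fun _ => C0). split; [|reflexivity].
    unfold vnorm. rewrite (Rsum_ext n _ (fun _ => 0)). rewrite Rsum_const. rewrite Rmult_0_r, sqrt_0. lra.
    intros; unfold Cnorm2, C0; simpl; ring.
  - exists m; auto.
Qed.

Lemma opnorm_le_Bd n M : opnorm n M <= Bd n M.
Proof. apply (proj2 (opnorm_lub n M)). intros t [x [Hx ->]]. apply vnorm_ub; auto. Qed.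

Lemma opnorm_ge n M k : (k < n)%nat -> cm (M O k) <= opnorm n M.
Proof.
  intros Hk. eapply Rle_trans; [|apply (proj1 (opnorm_lub n M))].
  2:{ exists (single k C1). split; [|reflexivity].
      unfold vnorm. rewrite (Rsum_single n _ k) by (first [lia | intros q _ Hq; unfold single;
        destruct (Nat.eqb_spec q k); [lia|]; unfold Cnorm2, C0; simpl; ring]).
      unfold single; rewrite Nat.eqb_refl. unfold Cnorm2, C1; simpl.
      replace (1*1+0*0) with 1 by ring. rewrite sqrt_1. lra. }
  unfold vnorm, cm. apply sqrt_le_1_alt.
  eapply Rle_trans; [|apply (Rsum_ge_term n _ O)]; [| lia | intros; apply Cnorm2_ge0].
  unfold mapply. rewrite (Csum_single n _ k) by (first [lia | intros q _ Hq; unfold single;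
        destruct (Nat.eqb_spec q k); [lia|]; ring]).
  unfold single; rewrite Nat.eqb_refl. right. f_equal. ring.
Qed.

Lemma small_scalar n delta : 0 < delta ->
  exists m : nat, (0 < m)%nat /\ opnorm n (T n (single 0 (/ INR m, 0))) < delta.
Proof.
  intros Hd.
  destruct (archimed_cor1 (delta * delta / (INR n + 1))) as [m [Hm Hm0]].
  { pose proof (pos_INR n). apply Rdiv_lt_0_compat; nra. }
  exists m; split; auto.
  eapply Rle_lt_trans; [apply opnorm_le_Bd|]. unfold Bd.
  set (r := / INR m).
  assert (Hr : 0 < r) by (unfold r; apply Rinv_0_lt_compat, lt_0_INR; auto).
  assert (Hr1 : r <= 1) by (unfold r; rewrite <- Rinv_1; apply Rinv_le_contravar; [lra|];
    apply (le_INR 1); lia).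
  assert (Hc : cm (r, 0) = r).
  { unfold cm, Cnorm2; simpl. replace (r*r+0*0) with (Rsqr r) by (unfold Rsqr; ring). apply sqrt_Rsqr; lra. }
  rewrite (Rsum_ext n _ (fun _ => Rsqr r)).
  2:{ intros i Hi. f_equal. rewrite (Rsum_single n _ i) by (first [lia | intros q Hq Hqi;
        destruct (Compare_dec.le_dec i q); [rewrite T_in by lia; unfold single;
        destruct (Nat.eqb_spec (q - i) 0); [lia|]; apply cm_C0 | rewrite T_out by lia; apply cm_C0]]).
      rewrite T_in by lia. rewrite Nat.sub_diag. unfold single; simpl. exact Hc. }
  rewrite Rsum_const. rewrite <- (sqrt_Rsqr delta) by lra. apply sqrt_lt_1_alt.
  pose proof (pos_INR n). unfold Rsqr. split; [nra|].
  assert (r * (INR n + 1) < delta * delta).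
  { apply (Rmult_lt_compat_r (INR n + 1)) in Hm; [|lra].
    unfold Rdiv in Hm. rewrite Rmult_assoc, Rinv_l in Hm by lra. unfold r; lra. }
  assert (INR n * (r*r) <= INR n * r) by (apply Rmult_le_compat_l; nra).
  nra.
Qed.

Lemma single_eq p v : single p v p = v.
Proof. unfold single; rewrite Nat.eqb_refl; reflexivity. Qed.
Lemma single_ne p v i : i <> p -> single p v i = C0.
Proof. intros H; unfold single; destruct (Nat.eqb_spec i p); [lia|reflexivity]. Qed.

Lemma conv_ext2 a a' b b' k : (forall q, (q <= k)%nat -> a q = a' q) -> (forall q, (q <= k)%nat -> b q = b' q) ->
  conv a b k = conv a' b' k.
Proof. intros Ha Hb. unfold conv. apply Csum_ext. intros q Hq. rewrite Ha, Hb by lia. reflexivity. Qed.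

Definition shiftp (p : nat) (a : nat -> Cx) : nat -> Cx := fun i => if Nat.ltb i p then C0 else a (i - p)%nat.

Lemma shiftp_conv p a i : shiftp p a i = conv (single p C1) a i.
Proof. rewrite conv_single_l. unfold shiftp. destruct (Nat.ltb_spec i p); destruct (Nat.leb_spec p i); try lia; ring. Qed.

Definition E (j : nat) (u : nat -> Cx) : Prop := u O = C1 /\ forall i, (0 < i < j)%nat -> u i = C0.

Lemma conv_E j u v i : E j u -> (0 < i <= j)%nat -> conv u v i = Cadd (Cmul (u i) (v O)) (Cmul (u O) (v i)).
Proof.
  intros [H0 Hu] Hi. unfold conv. rewrite Csum_two by (first [lia | intros q Hq; rewrite Hu by lia; ring]).
  rewrite Nat.sub_0_r, Nat.sub_diag. ring.
Qed.

Lemma E_conv j u v : (1 <= j)%nat -> E j u -> E j v -> E j (conv u v) /\ conv u v j = Cadd (u j) (v j).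
Proof.
  intros Hj Eu Ev. pose proof Eu as [Hu0 Hu]. pose proof Ev as [Hv0 Hv]. split; [split|].
  - unfold conv; simpl. rewrite Hu0, Hv0. ring.
  - intros i Hi. rewrite (conv_E j u v i) by (auto; lia). rewrite (Hu i), (Hv i) by lia. ring.
  - rewrite (conv_E j u v j) by (auto; lia). rewrite Hu0, Hv0. ring.
Qed.

Definition unitv (j : nat) (x : Cx) : nat -> Cx := fun i => Cadd (single 0 C1 i) (single j x i).

Lemma unitv_E j x : (1 <= j)%nat -> E j (unitv j x).
Proof.
  intros Hj. split.
  - unfold unitv. rewrite single_eq, single_ne by lia. ring.
  - intros i Hi. unfold unitv. rewrite !single_ne by lia. ring.
Qed.

Lemma unitv_j j x : (1 <= j)%nat -> unitv j x j = x.
Proof. intros Hj. unfold unitv. rewrite single_eq, single_ne by lia. ring. Qed.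

Lemma E_S j u : (1 <= j)%nat -> E j u -> u j = C0 -> E (S j) u.
Proof. intros Hj [H0 H] Hu. split; auto. intros i Hi. destruct (Nat.eq_dec i j); [subst; auto| apply H; lia]. Qed.

Definition Cinv (z : Cx) : Cx := (fst z / Cnorm2 z, - snd z / Cnorm2 z).

Lemma Cnorm2_pos z : z <> C0 -> Cnorm2 z <> 0.
Proof.
  intros Hz H. apply Hz. destruct z as [x y]. unfold Cnorm2 in H; simpl in H.
  assert (x = 0) by nra. assert (y = 0) by nra. subst. reflexivity.
Qed.

Lemma Cinv_l z : z <> C0 -> Cmul (Cinv z) z = C1.
Proof.
  intros Hz. pose proof (Cnorm2_pos z Hz). destruct z as [x y]. unfold Cinv, Cmul, C1, Cnorm2 in *; simpl in *.
  apply Cx_eq; simpl; field; auto.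
Qed.

Lemma cm_pos c : c <> C0 -> 0 < cm c.
Proof. intros Hc. unfold cm. apply sqrt_lt_R0. pose proof (Cnorm2_pos c Hc). pose proof (Cnorm2_ge0 c). lra. Qed.

Lemma tm m : (0 < m)%nat -> Cmul (/ INR m, 0) (INR m, 0) = C1.
Proof. intros Hm. assert (INR m <> 0) by (apply not_0_INR; lia). apply Cx_eq; simpl; field; auto. Qed.

Section Main.
Variable n : nat.
Variable phi : Mat -> Mat.
Hypothesis Hmaps : forall M, inA n M -> inA n (phi M).
Hypothesis Hmul : forall M N, inA n M -> inA n N -> phi (mmul n M N) = mmul n (phi M) (phi N).
Hypothesis Hcont : continuous_on_A n phi.
Hypothesis HS : phi (Sblock n) = Sblock n.
Hypothesis Hscal : forall a : Cx, phi (mscalar n a) = mscalar n a.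

Definition F (a : nat -> Cx) : nat -> Cx := fun i => phi (T n a) O i.

Lemma phiT a : phi (T n a) = T n (F a).
Proof. apply inA_T. apply Hmaps, T_inA. Qed.

Lemma F_ext a b : (forall i, (i < n)%nat -> a i = b i) -> forall i, F a i = F b i.
Proof. intros H i. unfold F. rewrite (T_ext n a b H). reflexivity. Qed.

Lemma F_conv a b i : (i < n)%nat -> F (conv a b) i = conv (F a) (F b) i.
Proof.
  intros Hi. unfold F at 1. rewrite <- T_mul, Hmul by apply T_inA. rewrite !phiT, T_mul, T_row0 by auto.
  reflexivity.
Qed.

Lemma F_single0 t i : (i < n)%nat -> F (single 0 t) i = single 0 t i.
Proof. intros Hi. unfold F. rewrite <- mscalar_T, Hscal, mscalar_T, T_row0 by auto. reflexivity. Qed.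

Lemma F_smul t a i : (i < n)%nat -> F (fun j => Cmul t (a j)) i = Cmul t (F a i).
Proof.
  intros Hi. rewrite (F_ext _ (conv (single 0 t) a)).
  2:{ intros j _. rewrite conv_single_l. simpl. rewrite Nat.sub_0_r. reflexivity. }
  rewrite F_conv by auto. rewrite (conv_ext2 _ (single 0 t) _ (F a)).
  - rewrite conv_single_l. simpl. rewrite Nat.sub_0_r. reflexivity.
  - intros q Hq. apply F_single0. lia.
  - auto.
Qed.

Lemma F_single1 i : (i < n)%nat -> F (single 1 C1) i = single 1 C1 i.
Proof. intros Hi. unfold F. rewrite <- Sblock_T, HS, Sblock_T, T_row0 by auto. reflexivity. Qed.

Lemma single_S p i : single (S p) C1 i = conv (single 1 C1) (single p C1) i.
Proof.
  rewrite conv_single_l. unfold single. destruct (Nat.leb_spec 1 i); destruct (Nat.eqb_spec i (S p));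
  destruct (Nat.eqb_spec (i - 1) p); try lia; ring.
Qed.

Lemma F_single_p p i : (i < n)%nat -> F (single p C1) i = single p C1 i.
Proof.
  revert i. induction p; intros i Hi.
  - apply F_single0; auto.
  - rewrite (F_ext _ (conv (single 1 C1) (single p C1))) by (intros; apply single_S).
    rewrite F_conv by auto. rewrite single_S. apply conv_ext2; intros q Hq.
    + apply F_single1; lia.
    + apply IHp; lia.
Qed.

Lemma F_shiftp p a i : (i < n)%nat -> F (shiftp p a) i = shiftp p (F a) i.
Proof.
  intros Hi. rewrite (F_ext _ (conv (single p C1) a)) by (intros; apply shiftp_conv).
  rewrite F_conv by auto. rewrite shiftp_conv. apply conv_ext2; intros q Hq; auto.
  apply F_single_p; lia.
Qed.

Lemma TD k a b : (k < n)%nat -> (forall i, (i <= k)%nat -> a i = b i) -> F a k = F b k.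
Proof.
  intros Hk H. set (p := (n - 1 - k)%nat).
  assert (Ha : forall c, F c k = shiftp p (F c) (n - 1)).
  { intros c. unfold shiftp. destruct (Nat.ltb_spec (n - 1) p); [lia|]. f_equal. unfold p; lia. }
  rewrite !Ha. rewrite <- !F_shiftp by lia. apply F_ext. intros i Hi. unfold shiftp.
  destruct (Nat.ltb_spec i p); auto. apply H. unfold p in *; lia.
Qed.

Definition IH (k : nat) : Prop := forall i, (i < k)%nat -> forall a, F a i = a i.

Lemma zero_case k : (k < n)%nat -> IH k -> forall a, a O = C0 -> F a k = a k.
Proof.
  intros Hk Ih a Ha0.
  rewrite (F_ext a (shiftp 1 (fun i => a (S i)))).
  2:{ intros i _. unfold shiftp. destruct (Nat.ltb_spec i 1).
      - replace i with O by lia; auto.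
      - f_equal; lia. }
  rewrite F_shiftp by auto. unfold shiftp. destruct (Nat.ltb_spec k 1).
  - replace k with O by lia; auto.
  - rewrite Ih by lia. f_equal; lia.
Qed.

Lemma base0 a : (0 < n)%nat -> F a O = a O.
Proof.
  intros Hn. rewrite (TD 0 a (single 0 (a O))) by (auto; intros i Hi; replace i with O by lia;
    rewrite single_eq; auto).
  rewrite F_single0 by auto. apply single_eq.
Qed.

Definition dl (k : nat) (u : nat -> Cx) : Cx := Csub (F u k) (u k).

Lemma dl_ext k u u' : (forall i, u i = u' i) -> dl k u = dl k u'.
Proof. intros H. unfold dl. rewrite (F_ext u u') by auto. rewrite H. reflexivity. Qed.

Lemma dl_hom k u v : (1 <= k)%nat -> (k < n)%nat -> IH k -> u O = C1 -> v O = C1 ->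
  dl k (conv u v) = Cadd (dl k u) (dl k v).
Proof.
  intros Hk1 Hk Ih Hu Hv. unfold dl. rewrite F_conv by auto. unfold conv.
  rewrite <- Csum_sub. rewrite Csum_two by (first [lia | intros q Hq; cbv beta; rewrite (Ih q), (Ih (k-q)%nat) by lia; ring]).
  rewrite Nat.sub_0_r, Nat.sub_diag. rewrite (Ih O ltac:(lia) u), (Ih O ltac:(lia) v). rewrite Hu, Hv. ring.
Qed.

Lemma cont_key k : (1 <= k)%nat -> (k < n)%nat -> IH k -> forall w c, w O = C0 ->
  (forall m, (0 < m)%nat -> dl k (fun i => Cadd (single 0 C1 i) (Cmul (INR m, 0) (w i))) = Cmul (INR m, 0) c) ->
  c = C0.
Proof.
  intros Hk1 Hk Ih w c Hw0 Hm.
  destruct (classic (c = C0)) as [|Hc]; auto. exfalso.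
  destruct (Hcont (T n w) (T_inA n w) (cm c) (cm_pos c Hc)) as [delta [Hd Hcd]].
  destruct (small_scalar n delta Hd) as [m [Hm0 Hsm]].
  set (t := (/ INR m, 0) : Cx). set (mm := (INR m, 0) : Cx).
  set (b := fun i => Cadd (w i) (single 0 t i)).
  specialize (Hcd (T n b) (T_inA n b)).
  rewrite (msub_T n b w) in Hcd. rewrite (T_ext n _ (single 0 t)) in Hcd.
  2:{ intros i _. unfold b. ring. }
  specialize (Hcd Hsm). rewrite !phiT, (msub_T n (F b) (F w)) in Hcd.
  pose proof (opnorm_ge n (T n (fun i => Csub (F b i) (F w i))) k Hk) as Hge. rewrite T_row0 in Hge by auto.
  assert (Hval : Csub (F b k) (F w k) = c).
  { set (u := fun i => Cadd (single 0 C1 i) (Cmul mm (w i))).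
    rewrite (F_ext b (fun i => Cmul t (u i))).
    2:{ intros i _. unfold b, u. destruct (Nat.eq_dec i 0).
        - subst i. rewrite Hw0, !single_eq. ring.
        - rewrite !single_ne by auto. transitivity (Cmul (Cmul t mm) (w i)).
          + unfold t, mm. rewrite tm by auto. ring.
          + ring. }
    rewrite F_smul by auto. rewrite (zero_case k Hk Ih w Hw0).
    specialize (Hm m Hm0). fold mm in Hm. fold u in Hm. unfold dl in Hm.
    assert (F u k = Cadd (u k) (Cmul mm c)) by (rewrite <- Hm; ring).
    rewrite H. unfold u. cbv beta. rewrite single_ne by lia.
    transitivity (Csub (Cadd (Cmul (Cmul t mm) (w k)) (Cmul (Cmul t mm) c)) (w k)); [ring|].
    unfold t, mm; rewrite tm by auto. ring. }
  rewrite Hval in Hge. lra.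
Qed.

Fixpoint pw (j : nat) (v : Cx) (m : nat) : nat -> Cx :=
  match m with O => single 0 C1 | S m' => conv (pw j v m') (unitv j v) end.

Lemma g_zero k j : (1 <= k)%nat -> (k < n)%nat -> IH k -> (1 <= j <= k)%nat ->
  (forall u, E (S j) u -> dl k u = C0) -> forall v, dl k (unitv j v) = C0.
Proof.
  intros Hk1 Hk Ih Hj HE v.
  set (g := dl k (unitv j v)).
  assert (Hpw : forall m, E j (pw j v m) /\ pw j v m j = Cmul (INR m, 0) v /\ dl k (pw j v m) = Cmul (INR m, 0) g).
  { induction m as [|m [E1 [E2 E3]]].
    - simpl pw. split; [|split].
      + split; [apply single_eq|]. intros i Hi; apply single_ne; lia.
      + rewrite single_ne by lia. apply Cx_eq; simpl; ring.
      + unfold dl. rewrite F_single0 by auto. rewrite single_ne by lia. apply Cx_eq; simpl; ring.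
    - simpl pw. destruct (E_conv j _ _ (proj1 Hj) E1 (unitv_E j v (proj1 Hj))) as [E4 E5].
      split; [auto|split].
      + rewrite E5, E2, unitv_j by lia. rewrite S_INR. apply Cx_eq; simpl; ring.
      + rewrite dl_hom by (auto; first [apply (proj1 E1) | apply (proj1 (unitv_E j v (proj1 Hj)))]).
        rewrite E3. fold g. rewrite S_INR. apply Cx_eq; simpl; ring. }
  apply (cont_key k Hk1 Hk Ih (single j v)); [apply single_ne; lia|].
  intros m Hm. set (mm := (INR m, 0) : Cx).
  rewrite (dl_ext k _ (unitv j (Cmul mm v))).
  2:{ intros i. unfold unitv, single. destruct (Nat.eqb_spec i j); ring. }
  destruct (Hpw m) as [P1 [P2 P3]]. fold mm in P2, P3.
  pose proof (unitv_E j (Cmul mm v) (proj1 Hj)) as U1.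
  pose proof (unitv_E j (Copp (Cmul mm v)) (proj1 Hj)) as U2.
  destruct (E_conv j _ _ (proj1 Hj) P1 U2) as [C1a C1b].
  destruct (E_conv j _ _ (proj1 Hj) U1 U2) as [C2a C2b].
  assert (Z1 : dl k (conv (pw j v m) (unitv j (Copp (Cmul mm v)))) = C0).
  { apply HE. apply E_S; auto; [lia|]. rewrite C1b, P2, unitv_j by lia. ring. }
  assert (Z2 : dl k (conv (unitv j (Cmul mm v)) (unitv j (Copp (Cmul mm v)))) = C0).
  { apply HE. apply E_S; auto; [lia|]. rewrite C2b, !unitv_j by lia. ring. }
  rewrite dl_hom in Z1 by (auto; first [apply (proj1 P1) | apply (proj1 U2)]).
  rewrite dl_hom in Z2 by (auto; first [apply (proj1 U1) | apply (proj1 U2)]).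
  rewrite P3 in Z1.
  transitivity (Cadd (Csub (Cadd (dl k (unitv j (Cmul mm v))) (dl k (unitv j (Copp (Cmul mm v)))))
                     (Cadd (Cmul mm g) (dl k (unitv j (Copp (Cmul mm v)))))) (Cmul mm g)); [ring|].
  rewrite Z1, Z2. ring.
Qed.

Lemma E_all k : (1 <= k)%nat -> (k < n)%nat -> IH k ->
  forall d j, j = (k + 1 - d)%nat -> (1 <= j)%nat -> forall u, E j u -> dl k u = C0.
Proof.
  intros Hk1 Hk Ih d. induction d as [|d IHd]; intros j Hjd Hj u Eu.
  - unfold dl. rewrite (TD k u (single 0 C1)) by (first [lia | intros i Hi; destruct (Nat.eq_dec i 0);
      [subst; rewrite single_eq; apply (proj1 Eu) | rewrite single_ne by auto; apply (proj2 Eu); lia]]).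
    rewrite F_single0 by auto. rewrite single_ne by lia. rewrite (proj2 Eu) by lia. ring.
  - assert (HS' : forall u, E (S j) u -> dl k u = C0).
    { intros u' Eu'. apply (IHd (S j)); auto; lia. }
    assert (Hg := g_zero k j Hk1 Hk Ih ltac:(lia) HS').
    pose proof (unitv_E j (Copp (u j)) Hj) as U.
    destruct (E_conv j _ _ Hj Eu U) as [Ca Cb].
    assert (Z : dl k (conv u (unitv j (Copp (u j)))) = C0).
    { apply HS'. apply E_S; auto. rewrite Cb, unitv_j by auto. ring. }
    rewrite dl_hom in Z by (auto; first [apply (proj1 Eu) | apply (proj1 U)]).
    rewrite Hg in Z. rewrite <- Z. ring.
Qed.

Lemma step k : (k < n)%nat -> IH k -> forall a, F a k = a k.
Proof.
  intros Hk Ih a. destruct k as [|k'].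
  - apply base0; lia.
  - set (k := S k') in *. assert (Hk1 : (1 <= k)%nat) by (unfold k; lia).
    destruct (classic (a O = C0)) as [Ha|Ha]; [apply zero_case; auto|].
    set (u := fun i => Cmul (Cinv (a O)) (a i)).
    rewrite (F_ext a (fun i => Cmul (a O) (u i))).
    2:{ intros i _. unfold u. transitivity (Cmul (Cmul (Cinv (a O)) (a O)) (a i)); [|ring].
        rewrite Cinv_l by auto. ring. }
    rewrite F_smul by auto.
    assert (Hd : dl k u = C0).
    { apply (E_all k Hk1 Hk Ih k 1); try lia. split; [apply Cinv_l; auto| intros; lia]. }
    unfold dl in Hd. assert (F u k = u k) by (transitivity (Cadd (Csub (F u k) (u k)) (u k)); [ring|];
      rewrite Hd; ring).
    rewrite H. unfold u. transitivity (Cmul (Cmul (Cinv (a O)) (a O)) (a k)); [ring|].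
    rewrite Cinv_l by auto. ring.
Qed.

Lemma all_IH : forall k, (k <= n)%nat -> IH k.
Proof.
  induction k; intros Hk.
  - intros i Hi; lia.
  - intros i Hi a. destruct (Nat.eq_dec i k).
    + subst. apply step; auto. apply IHk; lia.
    + apply IHk; lia.
Qed.

Lemma final : forall M, inA n M -> phi M = M.
Proof.
  intros M HA. rewrite (inA_T n M HA). rewrite phiT. apply T_ext. intros i Hi.
  apply (all_IH n (le_n n)); auto.
Qed.

End Main.

Theorem lemma2p3 (n : nat) (phi : Mat -> Mat)
  (Hmaps : forall M, inA n M -> inA n (phi M))
  (Hmul : forall M N, inA n M -> inA n N -> phi (mmul n M N) = mmul n (phi M) (phi N))
  (Hcont : continuous_on_A n phi)
  (HS : phi (Sblock n) = Sblock n)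
  (Hscal : forall a : Cx, phi (mscalar n a) = mscalar n a) :
  forall M, inA n M -> phi M = M.
Proof.
  exact (final n phi Hmaps Hmul Hcont HS Hscal).
Qed.
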